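(* For every time step $\Delta t>0$ and every mesh, let $(\phi_h^n,\psi_h^n,s_h^n)_{n\ge0}$ with $\phi_h^n,\psi_h^n\in V_h$, $s_h^n\in\mathbb R$, satisfy, for all $n\ge 0$ and all $v_h\in V_h$, $$\Big(\tfrac{\phi_h^{n+1}-\phi_h^n}{\Delta t},v_h\Big)=-\Big\{\xi^2(\psi_h^{n+1},v_h)-\xi^2(\nabla\psi_h^{n+1},\nabla v_h)+(u(\phi_h^n),v_h)\,s_h^{n+1}\Big\},$$ $$(\psi_h^{n},v_h)=(\phi_h^{n},v_h)-(\nabla\phi_h^{n},\nabla v_h)\quad(\text{for all }n\ge0),$$ $$s_h^{n+1}-s_h^n=\tfrac12\big(u(\phi_h^n),\phi_h^{n+1}-\phi_h^n\big).$$ Then with the modified energy $\tilde{\mathcal E}(\psi,s):=\frac{\xi^2}{2}\|\psi\|^2+s^2$ one has, for all $n\ge0$, $$\tilde{\mathcal E}(\psi_h^{n+1},s_h^{n+1})-\tilde{\mathcal E}(\psi_h^{n},s_h^{n})=-\Big\{\tfrac1{\Delta t}\|\phi_h^{n+1}-\phi_h^n\|^2+\tfrac{\xi^2}{2}\|\psi_h^{n+1}-\psi_h^n\|^2+(s_h^{n+1}-s_h^n)^2\Big\}\le0,$$ i.e. the scheme is unconditionally energy stable with respect to $\tilde{\mathcal E}$.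
   Context: $\Omega\subset\mathbb R^2$ is a bounded convex domain with Lipschitz boundary; $(\cdot,\cdot)$ and $\|\cdot\|$ denote the $L^2(\Omega)$ inner product and norm. $\xi,\alpha,\gamma$ are real parameters, $\mathcal N(\phi)=\frac{\alpha}{2}\phi^2-\frac{\gamma}{6}\phi^3+\frac{1}{24}\phi^4$, $\mathcal E_1(\phi)=\int_\Omega\mathcal N(\phi)\,d\mathbf r$, $D_0$ is a constant with $\mathcal E_1(\phi)+D_0>0$ for the arguments considered, and $u(\phi):=\mathcal N'(\phi)/\sqrt{\mathcal E_1(\phi)+D_0}$. $\mathcal T_h$ is a conforming triangulation of $\Omega$ and $V_h=\{w\in H^1(\Omega): w|_\tau\in P_1(\tau)\ \forall\tau\in\mathcal T_h\}$ is the continuous piecewise linear finite element space. *)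

(* Defs.v *)
From Stdlib Require Import Reals.
Open Scope R_scope.

(* Real-valued functions on the plane (finite element functions, L^2 functions). *)
Definition fn := ((R * R)%type -> R).

Definition Nf (alpha gamma x : R) : R :=
  alpha / 2 * x ^ 2 - gamma / 6 * x ^ 3 + / 24 * x ^ 4.
Definition dNf (alpha gamma x : R) : R :=
  alpha * x - gamma / 2 * x ^ 2 + / 6 * x ^ 3.

Definition lincomb (a : R) (f : fn) (b : R) (g : fn) : fn :=
  fun p => a * f p + b * g p.

(* integ plays the role of  f |-> \int_Omega f  *)
Definition l2ip (integ : fn -> R) (f g : fn) : R := integ (fun p => f p * g p).
Definition l2norm2 (integ : fn -> R) (f : fn) : R := l2ip integ f f.

Definition gradip (integ : fn -> R) (grad : fn -> (R * R)%type -> (R * R)%type)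
  (f g : fn) : R :=
  integ (fun p => fst (grad f p) * fst (grad g p) + snd (grad f p) * snd (grad g p)).

Definition Eone (integ : fn -> R) (alpha gamma : R) (phi : fn) : R :=
  integ (fun p => Nf alpha gamma (phi p)).

Definition ufun (integ : fn -> R) (alpha gamma D0 : R) (phi : fn) : fn :=
  fun p => dNf alpha gamma (phi p) / sqrt (Eone integ alpha gamma phi + D0).

Definition Etilde (integ : fn -> R) (xi : R) (psi : fn) (s : R) : R :=
  xi ^ 2 / 2 * l2norm2 integ psi + s ^ 2.

(* Main.v *)
Require Import Defs.
From Stdlib Require Import Reals Lra Psatz FunctionalExtensionality.
Open Scope R_scope.

Theorem theorem3p1
  (xi alpha gamma D0 dt : R)
  (integ : fn -> R) (Int : fn -> Prop)
  (Vh : fn -> Prop) (grad : fn -> (R * R)%type -> (R * R)%type)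
  (* integ is a linear, positive functional on the integrable functions Int *)
  (Hint_lin : forall f g a b, Int f -> Int g ->
     Int (lincomb a f b g) /\ integ (lincomb a f b g) = a * integ f + b * integ g)
  (Hint_pos : forall f, Int f -> (forall p, 0 <= f p) -> 0 <= integ f)
  (* V_h is a linear space, the gradient is linear on it *)
  (HVh : forall f g a b, Vh f -> Vh g -> Vh (lincomb a f b g))
  (Hgrad : forall f g a b p, Vh f -> Vh g ->
     grad (lincomb a f b g) p =
       (a * fst (grad f p) + b * fst (grad g p), a * snd (grad f p) + b * snd (grad g p)))
  (* integrability of the integrands occurring in the scheme *)
  (Hint_VV : forall f g, Vh f -> Vh g -> Int (fun p => f p * g p))
  (Hint_grad : forall f g, Vh f -> Vh g ->
     Int (fun p => fst (grad f p) * fst (grad g p) + snd (grad f p) * snd (grad g p)))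
  (Hint_u : forall f v, Vh f -> Vh v -> Int (fun p => ufun integ alpha gamma D0 f p * v p))
  (Hdt : 0 < dt)
  (phi psi : nat -> fn) (s : nat -> R)
  (Hphi : forall n, Vh (phi n)) (Hpsi : forall n, Vh (psi n))
  (HD0 : forall n, Eone integ alpha gamma (phi n) + D0 > 0)
  (Heq1 : forall n v, Vh v ->
     l2ip integ (lincomb (/ dt) (phi (S n)) (- / dt) (phi n)) v =
     - (xi ^ 2 * l2ip integ (psi (S n)) v
        - xi ^ 2 * gradip integ grad (psi (S n)) v
        + l2ip integ (ufun integ alpha gamma D0 (phi n)) v * s (S n)))
  (Heq2 : forall n v, Vh v ->
     l2ip integ (psi n) v = l2ip integ (phi n) v - gradip integ grad (phi n) v)
  (Heq3 : forall n,
     s (S n) - s n =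
     / 2 * l2ip integ (ufun integ alpha gamma D0 (phi n)) (lincomb 1 (phi (S n)) (-1) (phi n))) :
  forall n,
    Etilde integ xi (psi (S n)) (s (S n)) - Etilde integ xi (psi n) (s n) =
      - (/ dt * l2norm2 integ (lincomb 1 (phi (S n)) (-1) (phi n))
         + xi ^ 2 / 2 * l2norm2 integ (lincomb 1 (psi (S n)) (-1) (psi n))
         + (s (S n) - s n) ^ 2)
    /\
    - (/ dt * l2norm2 integ (lincomb 1 (phi (S n)) (-1) (phi n))
       + xi ^ 2 / 2 * l2norm2 integ (lincomb 1 (psi (S n)) (-1) (psi n))
       + (s (S n) - s n) ^ 2) <= 0.
Proof.
  assert (Sym : forall f g, l2ip integ f g = l2ip integ g f).
  { intros f g; unfold l2ip; f_equal; apply functional_extensionality; intro p; ring. }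
  assert (GSym : forall f g, gradip integ grad f g = gradip integ grad g f).
  { intros f g; unfold gradip; f_equal; apply functional_extensionality; intro p; ring. }
  assert (Lin : forall f g h a b, Vh f -> Vh g -> Vh h ->
     l2ip integ f (lincomb a g b h) = a * l2ip integ f g + b * l2ip integ f h).
  { intros f g h a b Hf Hg Hh; unfold l2ip.
    replace (fun p => f p * lincomb a g b h p) with
      (lincomb a (fun p => f p * g p) b (fun p => f p * h p)).
    - apply Hint_lin; auto.
    - apply functional_extensionality; intro p; unfold lincomb; ring. }
  assert (GLin : forall f g h a b, Vh f -> Vh g -> Vh h ->
     gradip integ grad f (lincomb a g b h) = a * gradip integ grad f g + b * gradip integ grad f h).
  { intros f g h a b Hf Hg Hh; unfold gradip.
    replace (fun p => fst (grad f p) * fst (grad (lincomb a g b h) p) +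
                      snd (grad f p) * snd (grad (lincomb a g b h) p)) with
      (lincomb a (fun p => fst (grad f p) * fst (grad g p) + snd (grad f p) * snd (grad g p))
               b (fun p => fst (grad f p) * fst (grad h p) + snd (grad f p) * snd (grad h p))).
    - apply Hint_lin; auto.
    - apply functional_extensionality; intro p; rewrite Hgrad by auto; unfold lincomb; simpl; ring. }
  intro n.
  set (p1 := phi (S n)) in *. set (p0 := phi n) in *.
  set (q1 := psi (S n)) in *. set (q0 := psi n) in *.
  assert (V1 : Vh p1) by apply Hphi. assert (V0 : Vh p0) by apply Hphi.
  assert (W1 : Vh q1) by apply Hpsi. assert (W0 : Vh q0) by apply Hpsi.
  assert (Vd : Vh (lincomb 1 p1 (-1) p0)) by auto.
  assert (Vk : Vh (lincomb (/dt) p1 (- / dt) p0)) by auto.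
  assert (E1 := Heq1 n (lincomb 1 p1 (-1) p0) Vd). fold p1 p0 q1 in E1.
  assert (E2a := Heq2 (S n) q1 W1). fold p1 q1 in E2a.
  assert (E2b := Heq2 n q1 W1). fold p0 q0 in E2b.
  assert (E3 := Heq3 n). fold p1 p0 in E3.
  set (a := l2ip integ (ufun integ alpha gamma D0 p0) (lincomb 1 p1 (-1) p0)) in *.
  assert (Pos : forall f, Vh f -> 0 <= l2norm2 integ f).
  { intros f Hf; unfold l2norm2, l2ip; apply Hint_pos; auto. intro; apply Rle_0_sqr. }
  assert (Pd := Pos _ Vd). assert (Pq : 0 <= l2norm2 integ (lincomb 1 q1 (-1) q0)) by auto.
  rewrite Sym, Lin in E1 by auto.
  rewrite (Sym (lincomb 1 p1 (-1) p0) p1), (Sym (lincomb 1 p1 (-1) p0) p0), !Lin in E1 by auto.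
  rewrite ?Lin, GLin in E1 by auto.
  rewrite (Sym q1 p1), (Sym q1 p0), (GSym q1 p1), (GSym q1 p0) in E1.
  unfold l2norm2 in *.
  rewrite Lin in Pd by auto. rewrite (Sym (lincomb 1 p1 (-1) p0) p1), (Sym (lincomb 1 p1 (-1) p0) p0), !Lin in Pd by auto.
  split.
  - unfold Etilde, l2norm2.
    rewrite (Lin _ p1 p0) by auto.
    rewrite (Sym (lincomb 1 p1 (-1) p0) p1), (Sym (lincomb 1 p1 (-1) p0) p0), !Lin by auto.
    rewrite (Sym (lincomb 1 q1 (-1) q0) q1), (Sym (lincomb 1 q1 (-1) q0) q0), !Lin by auto.
    rewrite (Sym p0 p1), (Sym q1 q0).
    rewrite (Sym p0 p1) in E1. rewrite E2a, E2b.
    assert (Hs : a = 2 * (s (S n) - s n)) by lra.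
    rewrite Hs in E1.
    set (k := / dt) in *.
    lra.
  - assert (0 < / dt) by (apply Rinv_0_lt_compat; lra).
    assert (0 <= xi ^ 2 / 2 * l2ip integ (lincomb 1 q1 (-1) q0) (lincomb 1 q1 (-1) q0)).
    { apply Rmult_le_pos; [|exact Pq]. assert (0 <= xi^2) by (apply pow2_ge_0). lra. }
    assert (0 <= (s (S n) - s n) ^ 2) by apply pow2_ge_0.
    assert (0 <= / dt * l2ip integ (lincomb 1 p1 (-1) p0) (lincomb 1 p1 (-1) p0)).
    { apply Rmult_le_pos; [lra|]. apply Pos; auto. }
    lra.
Qed.
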